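(* Let $\rho$ be a state on $\mathcal H_{AB}$ and let $\mathcal F$ be a convex set of states on $\mathcal H_{AB}$. Then for every $\epsilon>0$, $\gamma^{\epsilon}_{\mathcal F}(\rho)\ge 2^{D^{\epsilon}_{\max}(\rho\|\mathcal F)}$.
   Context: $\log$ base 2. $B_\epsilon(\rho)=\{\tau\text{ a state on }\mathcal H_{AB}: d(\tau,\rho)\le\epsilon\}$ with $d$ the trace-norm induced distance. The smoothed $\gamma$-factor is $\gamma^{\epsilon}_{\mathcal F}(\rho)=\inf\{c_1+c_2:\ \sigma=c_1\sigma_1-c_2\sigma_2,\ c_1,c_2\ge0,\ \sigma_1,\sigma_2\in\mathcal F,\ \sigma\in B_\epsilon(\rho)\}$. The smoothed max-relative entropy with respect to $\mathcal F$ is $D^{\epsilon}_{\max}(\rho\|\mathcal F)=\min_{\tau\in B_\epsilon(\rho)}\inf_{\sigma\in\mathcal F}\inf\{\lambda\in\mathbb R:\tau\le2^{\lambda}\sigma\}$. *)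

(* Defs.v *)
From HB Require Import structures.
From mathcomp Require Import all_boot all_order all_algebra.
From mathcomp.real_closed Require Import complex.
From mathcomp Require Import all_classical all_reals.
From mathcomp Require Import ereal exp.

Set Implicit Arguments.
Unset Strict Implicit.
Unset Printing Implicit Defensive.

Import Order.TTheory GRing.Theory Num.Theory.
Local Open Scope ring_scope.
Local Open Scope classical_set_scope.
Local Notation "x %:C" := (real_complex _ x) (format "x %:C").

Section QDefs.
Variable R : realType.
Local Notation C := (complex R).

Definition adjmx m n (A : 'M[C]_(m, n)) : 'M[C]_(n, m) :=
  map_mx (@conjc R) A^T.

Definition hermitian n (A : 'M[C]_n) : Prop := adjmx A = A.

Definition psd n (A : 'M[C]_n) : Prop :=
  hermitian A /\ forall v : 'cV[C]_n, 0 <= (adjmx v *m A *m v) 0 0.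

Definition loewner_le n (A B : 'M[C]_n) : Prop := psd (B - A).

Definition is_state n (A : 'M[C]_n) : Prop := psd A /\ \tr A = 1.

(* trace norm ||X||_1 = tr sqrt(X^* X), where sqrt(X^* X) is the (unique)
   positive semidefinite square root of X^* X *)
Definition trace_norm n (X : 'M[C]_n) : R :=
  inf [set r : R | exists P : 'M[C]_n,
         [/\ psd P, P *m P = adjmx X *m X & (\tr P) = r%:C]].

Definition tdist n (A B : 'M[C]_n) : R := trace_norm (A - B).

Definition ball_eps n (eps : R) (rho : 'M[C]_n) : set 'M[C]_n :=
  [set tau | is_state tau /\ tdist tau rho <= eps].

Definition set_of_states n (F : set 'M[C]_n) : Prop :=
  forall s, F s -> is_state s.

Definition convex_set n (F : set 'M[C]_n) : Prop :=
  forall a b (t : R), F a -> F b -> 0 <= t <= 1 ->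
    F (t%:C *: a + (1 - t)%:C *: b).

(* smoothed gamma-factor (infimum in extended reals; +oo if no decomposition) *)
Definition gamma_eps n (F : set 'M[C]_n) (eps : R) (rho : 'M[C]_n) : \bar R :=
  ereal_inf [set x : \bar R | exists (c1 c2 : R) s1 s2 sigma,
     [/\ F s1 /\ F s2, 0 <= c1 /\ 0 <= c2,
          sigma = c1%:C *: s1 - c2%:C *: s2, ball_eps eps rho sigma
        & x = (c1 + c2)%:E]].

Definition Dmax n (tau : 'M[C]_n) (F : set 'M[C]_n) : \bar R :=
  ereal_inf [set ereal_inf [set lam%:E | lam in
                 [set lam : R | loewner_le tau ((2 `^ lam)%:C *: sigma)]]
            | sigma in F].

(* smoothed max-relative entropy (the min over the ball written as inf) *)
Definition Dmax_eps n (eps : R) (rho : 'M[C]_n) (F : set 'M[C]_n) : \bar R :=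
  ereal_inf [set Dmax tau F | tau in ball_eps eps rho].

Definition exp2e (x : \bar R) : \bar R :=
  match x with
  | r%:E => (2 `^ r)%:E
  | +oo%E => +oo%E
  | -oo%E => 0%E
  end.

End QDefs.

(* Main.v *)
Require Import Defs.
From HB Require Import structures.
From mathcomp Require Import all_boot all_order all_algebra.
From mathcomp.real_closed Require Import complex.
From mathcomp Require Import all_classical all_reals.
From mathcomp Require Import ereal exp.
Import Order.TTheory GRing.Theory Num.Theory.
Local Open Scope ring_scope.
Local Open Scope classical_set_scope.

Lemma rc_ge0 (R : realType) (c : R) : 0 <= c -> 0 <= real_complex R c.
Proof. by move=> h; rewrite -(raddf0 (real_complex R)) lecR. Qed.

Lemma conjc_rcM (R : realType) (c : R) (x : complex R) :
  conjc (real_complex R c * x) = real_complex R c * conjc x.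
Proof. by case: x => a b; rewrite /= [RHS]/GRing.mul /= !mul0r !subr0 !addr0 mulrN. Qed.

Lemma psd_scale (R : realType) n (c : R) (A : 'M[complex R]_n) :
  0 <= c -> psd A -> psd (real_complex R c *: A).
Proof.
move=> c0 [hA pA]; split.
  rewrite /Defs.hermitian /Defs.adjmx; apply/matrixP => i j.
  by rewrite !mxE -[in RHS]hA /Defs.adjmx !mxE conjc_rcM.
move=> v; rewrite -scalemxAr -scalemxAl mxE.
by apply: mulr_ge0; [exact: rc_ge0|exact: pA].
Qed.

Theorem lemma5 (R : realType) (dA dB : nat)
  (rho : 'M[complex R]_(dA * dB)) (F : set 'M[complex R]_(dA * dB)) :
  is_state rho -> set_of_states F -> convex_set F ->
  forall eps : R, 0 < eps ->
  (exp2e (Dmax_eps eps rho F) <= gamma_eps F eps rho)%E.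
Proof.
move=> _ hF _ eps _; apply/ereal_infP => y [c1 [c2 [s1 [s2 [sigma]]]]].
case=> -[F1 F2] [c10 c20] sE hball ->.
have [st1 st2] := (hF _ F1, hF _ F2).
have c1pos : 0 < c1.
  rewrite lt_def c10 andbT; apply/eqP => c1z.
  have := (proj2 (proj1 hball)); rewrite sE c1z raddf0 scale0r sub0r.
  rewrite raddfN /= mxtraceZ (proj2 st2) mulr1 => /eqP.
  rewrite -(rmorph1 (real_complex R)) -raddfN /= => /eqP/complexI/eqP.
  by rewrite -subr_eq0 -opprD oppr_eq0 paddr_eq0 // oner_eq0 andbF.
pose lam := ln c1 / ln 2.
have ln2 : 0 < ln (2:R) by rewrite ln_gt0 // ltr1n.
have hlam : 2 `^ lam = c1.
  rewrite /powR pnatr_eq0 /= /lam mulfVK ?gt_eqF //; exact: lnK.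
have hD : (Dmax_eps eps rho F <= lam%:E)%E.
  apply: (@le_trans _ _ (Dmax sigma F)).
    by apply: ereal_inf_lbound; exists sigma.
  apply: (@le_trans _ _ (ereal_inf [set lam%:E | lam in
                 [set lam : R | loewner_le sigma (real_complex R (2 `^ lam) *: s1)]])).
    by apply: ereal_inf_lbound; exists s1.
  apply: ereal_inf_lbound; exists lam => //.
  change (loewner_le sigma (real_complex R (2 `^ lam) *: s1)).
  rewrite hlam /loewner_le sE opprB addrC subrK.
  by apply: psd_scale => //; exact: (proj1 st2).
case: (Dmax_eps eps rho F) hD => [r||] /=.
- rewrite lee_fin => rl; rewrite lee_fin; apply: (le_trans (ler_powR _ rl)).
    by rewrite ler1n.
  by rewrite hlam lerDl.
- by [].
- by move=> _; rewrite lee_fin addr_ge0.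
Qed.
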